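(* Let $\mathsf{T}$ be a rooted plane tree with $n\geq 2$ nodes and root $\mathfrak{r}$. Let $C^*\in\mathcal{M}_\mathsf{T}$ be a maximal chain with $|C^*|+f_{C^*}(\mathfrak{r})=\max_{C\in\mathcal{M}_\mathsf{T}}(|C|+f_C(\mathfrak{r}))$, and let $k=f_{C^*}(\mathfrak{r})$. Let $v_0=\mathfrak{r},v_1,\dots,v_{|C^*|-1}$ be the nodes of $C^*$ from top to bottom. For $0\leq i\leq|C^*|-2$, let $B_i=\{u\in\mathsf{T}\setminus C^*:u\leq_\mathsf{T} v_i,\ u\not\leq_\mathsf{T} v_{i+1}\}$. Define a partial order $\sqsubseteq$ on $\mathsf{T}\setminus C^*$ by: for $x\in B_i$, $y\in B_j$, if $i>j$ then $x\sqsubseteq y$; if $i=j$ then $x\sqsubseteq y$ iff $x\geq_\mathsf{T} y$. Let $v_{|C^*|},v_{|C^*|+1},\dots,v_{|\mathsf{T}|-1}$ be an ordering of $\mathsf{T}\setminus C^*$ such that $a\leq b$ whenever $v_a\sqsubseteq v_b$. Then for each integer $0\leq i<k$, the nodes $v_{|C^*|},v_{|C^*|+1},\dots,v_{|C^*|+k-i-1}$ are descendants of $v_{i+1}$.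
   Context: A rooted plane tree $\mathsf{T}$ is a finite tree with a distinguished root $\mathfrak{r}$, regarded as a poset $\leq_\mathsf{T}$ in which $v'\leq_\mathsf{T} v$ iff $v$ lies on the path from $v'$ to $\mathfrak{r}$. $\Delta_\mathsf{T}(v)=\{v':v'\leq_\mathsf{T} v\}$; a descendant of $v$ is an element of $\Delta_\mathsf{T}(v)\setminus\{v\}$; a leaf is a node with no descendants. $\mathcal{M}_\mathsf{T}$ is the set of maximal chains of $\mathsf{T}$ (paths from a leaf to the root). For $C\in\mathcal{M}_\mathsf{T}$ and $v\in C$: $\mathrm{height}_C(v)$ is the number of elements of $C$ strictly below $v$; if $v$ is not a leaf, $\mathrm{ch}_C(v)$ is the unique element of $C$ covered by $v$; $b_C(v)=|\Delta_\mathsf{T}(v)|-\mathrm{height}_C(v)-1$. The function $f_C\colon C\to\mathbb{Z}_{\geq 0}$ is defined recursively: $f_C(v)=0$ if $v$ is a leaf; otherwise, with $w=\mathrm{ch}_C(v)$, $f_C(v)=f_C(w)+1$ if $f_C(w)+1\leq b_C(w)$, and $f_C(v)=f_C(w)$ otherwise. *)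

(* Defs.v *)
From mathcomp Require Import all_boot.
Set Implicit Arguments. Unset Strict Implicit. Unset Printing Implicit Defensive.

(* A rooted tree on a finite node type V: root r, parent map par with
   par r = r, and every node reaches the root by iterating par.
   (The planar ordering of children plays no role in the statement.) *)
Definition is_rooted_tree (V : finType) (r : V) (par : V -> V) : Prop :=
  par r = r /\ forall v : V, exists k, iter k par v = r.

Section Tree.
Variables (V : finType) (r : V) (par : V -> V).

(* u <=_T v  iff v lies on the path from u to the root
   (path lengths in a tree on V are < #|V|). *)
Definition tle (u v : V) : bool := [exists k : 'I_#|V|.+1, iter k par u == v].

Definition Delta (v : V) : {set V} := [set u | tle u v].

Definition descendant (u v : V) : bool := tle u v && (u != v).

Definition leafb (v : V) : bool := [forall u, tle u v ==> (u == v)].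

Definition is_maxchain (C : {set V}) : Prop :=
  exists2 l : V, leafb l & C = [set v | tle l v].

Definition height (C : {set V}) (v : V) : nat :=
  #|[set u in C | descendant u v]|.

Definition ch (C : {set V}) (v : V) : option V :=
  [pick w in C | (par w == v) && (w != v)].

Definition bC (C : {set V}) (v : V) : nat := #|Delta v| - height C v - 1.

Fixpoint f_fuel (C : {set V}) (n : nat) (v : V) : nat :=
  match n with
  | 0 => 0
  | n'.+1 =>
      if leafb v then 0 else
      match ch C v with
      | None => 0
      | Some w => let x := f_fuel C n' w in
                  if x.+1 <= bC C w then x.+1 else x
      end
  end.

(* f_C(v); recursion depth is height_C(v) < #|V| *)
Definition fC (C : {set V}) (v : V) : nat := f_fuel C #|V| v.

Definition Bset (Cs : {set V}) (vv : nat -> V) (i : nat) : {set V} :=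
  [set u | (u \notin Cs) && tle u (vv i) && ~~ tle u (vv i.+1)].

Definition sqle (Cs : {set V}) (vv : nat -> V) (x y : V) : Prop :=
  exists i j, [/\ i.+2 <= #|Cs|, j.+2 <= #|Cs|, x \in Bset Cs vv i,
                  y \in Bset Cs vv j &
                  (j < i) \/ (i = j /\ tle y x)].
End Tree.

(* Main.v *)
Require Import Defs.
From mathcomp Require Import all_boot.
From mathcomp Require Import zify.

Lemma iter_fixr (V : Type) (par : V -> V) (r : V) n : par r = r -> iter n par r = r.
Proof. by move=> H; elim: n => //= n ->. Qed.

Lemma tleP (V : finType) (r : V) (par : V -> V) (Ht : is_rooted_tree r par) u w :
  reflect (exists k, iter k par u = w) (tle par u w).
Proof.
apply: (iffP existsP).
  by move=> [k /eqP <-]; exists k.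
move=> [k Hk].
have [d0 Hd0] := Ht.2 u.
pose P := fun d => iter d par u == r.
have exP : exists d, P d by exists d0; apply/eqP.
case: (ex_minnP exP) => d /eqP Hd Hmin.
have HdV : d < #|V|.
  have Hu : uniq [seq iter i par u | i <- iota 0 d.+1].
    rewrite map_inj_in_uniq ?iota_uniq // => i j; rewrite !mem_iota /= => Hi Hj Hij.
    have key : forall i j, i < j -> j < d.+1 -> iter i par u = iter j par u -> False.
      move=> i' j' lt jd E.
      have : P ((d - j') + i') by rewrite /P iterD E -iterD subnK ?Hd //.
      move/Hmin; lia.
    case: (ltngtP i j) => h //; [exfalso; apply: (key i j) => //; lia|].
    exfalso; apply: (key j i) => //; lia.
  have := card_uniqP Hu; rewrite size_map size_iota => <-.
  exact: max_card.
case: (leqP k d) => hk.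
  have hk' : k < #|V|.+1 by lia.
  by exists (Ordinal hk'); rewrite Hk.
have hd' : d < #|V|.+1 by lia.
exists (Ordinal hd'); apply/eqP => /=; rewrite Hd -Hk.
by rewrite -(subnK (ltnW hk)) iterD Hd iter_fixr //; case: Ht.
Qed.

Theorem lemma3p1 (V : finType) (r : V) (par : V -> V)
  (Htree : is_rooted_tree r par) (Hn : 2 <= #|V|)
  (Cs : {set V}) (HCs : is_maxchain par Cs)
  (Hmax : forall C : {set V}, is_maxchain par C ->
            #|C| + fC par C r <= #|Cs| + fC par Cs r)
  (v : nat -> V)
  (Hinj : forall a b, a < #|V| -> b < #|V| -> v a = v b -> a = b)
  (Hsurj : forall u : V, exists2 a, a < #|V| & v a = u)
  (Hv0 : v 0 = r)
  (HvC : forall i, i < #|Cs| -> v i \in Cs)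
  (Hvpar : forall i, i.+1 < #|Cs| -> par (v i.+1) = v i)
  (Hord : forall a b, #|Cs| <= a < #|V| -> #|Cs| <= b < #|V| ->
            sqle par Cs v (v a) (v b) -> a <= b) :
  let k := fC par Cs r in
  forall i, i < k -> forall a, #|Cs| <= a < #|Cs| + (k - i) ->
    descendant par (v a) (v i.+1).
Proof.
move=> k i ik a /andP[ha1 ha2].
rewrite /k /fC -Hv0 in ik ha2.
set m := #|Cs| in ha1 ha2 HvC Hvpar Hord *.
have [Hr Hreach] := Htree.
have tleP' := @tleP V r par Htree.
have tle_refl : forall u, tle par u u by move=> u; apply/tleP'; exists 0.
have tle_trans : forall x y z, tle par x y -> tle par y z -> tle par x z.
  move=> x y z /tleP'[p <-] /tleP'[q <-]; apply/tleP'; exists (q + p); by rewrite iterD.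
have tle_r : forall u, tle par u r by move=> u; apply/tleP'; apply: Hreach.
have mV : m <= #|V| by exact: max_card.
have vchain : forall p q, p <= q < m -> tle par (v q) (v p).
  move=> p q /andP[pq qm]; apply/tleP'; exists (q - p).
  have : forall d p, p + d < m -> iter d par (v (p + d)) = v p.
    elim=> [|d IH] p' h; first by rewrite addn0.
    rewrite iterSr addnS Hvpar; last lia.
    by rewrite IH //; lia.
  by move/(_ (q - p) p); rewrite subnKC //; apply.
have Cs_img : forall x, x \in Cs -> exists2 p, p < m & v p = x.
  move=> x xC.
  pose S := [set v (nat_of_ord p) | p : 'I_m].
  have SC : S \subset Cs by apply/subsetP => y /imsetP[p _ ->]; apply: HvC.
  have cS : #|S| = m.
    rewrite card_imset ?card_ord // => p q E; apply/val_inj; have := ltn_ord p; have := ltn_ord q; move=> hq hp; apply: (Hinj _ _ _ _ E); lia.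
  have : S == Cs by rewrite eqEcard SC cS leqnn.
  move/eqP => E; rewrite -E in xC; case/imsetP: xC => p _ ->.
  by exists p.
have [l Hl HCs'] := HCs.
have lCs : l \in Cs by rewrite HCs' inE.
have m_pos : 0 < m by have [p pm _] := Cs_img l lCs; lia.
have vlast : v m.-1 = l.
  have [p pm vp] := Cs_img l lCs.
  have : tle par (v m.-1) (v p) by apply: vchain; lia.
  rewrite vp; move: (forallP Hl (v m.-1)) => /implyP H /H /eqP //.
have notC_low : forall u, u \notin Cs -> ~~ tle par u (v m.-1).
  move=> u uC; apply/negP => H; rewrite vlast in H.
  move: (forallP Hl u) => /implyP /(_ H) /eqP E.
  by rewrite E lCs in uC.
have ch_step : forall j w, j < m -> w \in Cs -> par w = v j -> w != v j ->
    j.+1 < m /\ w = v j.+1.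
  move=> j w jm wC pw wn.
  have [p pm vp] := Cs_img w wC.
  case: p pm vp => [|p] pm vp.
    by rewrite -vp Hv0 Hr -Hv0 vp in pw; rewrite pw eqxx in wn.
  rewrite -vp Hvpar // in pw.
  have E : p = j by apply: (Hinj _ _ _ _ pw); lia.
  by rewrite -E; split => //; lia.
pose G j := #|[set u | tle par u (v j) && (u \notin Cs)]|.
have bC_eq : forall j, j < m -> bC par Cs (v j) = G j.
  move=> j jm; rewrite /bC /Delta /height /G.
  set D := [set u | tle par u (v j)].
  have E1 : D :\: Cs = [set u | tle par u (v j) && (u \notin Cs)].
    by apply/setP => u; rewrite !inE andbC.
  have E2 : D :&: Cs = v j |: [set u in Cs | descendant par u (v j)].
    apply/setP => u; rewrite !inE /descendant.
    case: (eqVneq u (v j)) => [->|_]; first by rewrite tle_refl HvC.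
    by rewrite andbT andbC.
  have := cardsID Cs D; rewrite E1 E2 cardsU1 inE /descendant eqxx !andbF /=.
  lia.
have G_mono : forall j, j.+1 < m -> G j.+1 <= G j.
  move=> j jm; apply: subset_leq_card; apply/subsetP => u; rewrite !inE.
  case/andP => h ->; rewrite andbT; apply: tle_trans h _; apply: vchain; lia.
have f_step : forall n j, j < m -> f_fuel par Cs n.+1 (v j) = 0 \/
    (j.+1 < m /\ f_fuel par Cs n.+1 (v j) =
       (let x := f_fuel par Cs n (v j.+1) in if x.+1 <= G j.+1 then x.+1 else x)).
  move=> n j jm /=; case: leafb; first by left.
  rewrite /ch; case: pickP => [w /andP[wC /andP[/eqP pw wn]]|_]; last by left.
  have [j1 ->] := ch_step j w jm wC pw wn.
  by right; split => //; rewrite bC_eq.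
have I : forall n j, j < m -> f_fuel par Cs n (v j) <= G j.
  elim=> [|n IH] j jm; first done.
  case: (f_step n j jm) => [->//|[j1 ->]] /=.
  have := IH _ j1; have := G_mono j j1.
  case: ifP => hh; [|move/negbT: hh]; lia.
have L : forall n j, j < m -> forall i0, j <= i0 -> i0 - j < f_fuel par Cs n (v j) ->
    i0.+1 < m /\ f_fuel par Cs n (v j) - (i0 - j) <= G i0.+1.
  elim=> [|n IH] j jm i0 ji; first by rewrite ltn0.
  case: (f_step n j jm) => [->|[j1 ->]]; first by rewrite ltn0.
  rewrite /=; set x := f_fuel par Cs n (v j.+1).
  case: (ltnP j i0) => [ji'|ij].
    move=> hlt.
    have [H1 H2] : i0.+1 < m /\ x - (i0 - j.+1) <= G i0.+1.
      by apply: IH => //; move: hlt; case: ifP => hh; [|move/negbT: hh]; lia.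
    by split => //; move: hlt H2; case: ifP => hh; [|move/negbT: hh]; lia.
  have := I n j.+1 j1; rewrite -/x => hx.
  have ieq : i0 = j by lia.
  subst i0; split => //; case: ifP => hh; [|move/negbT: hh]; lia.
have [im Gi] := L #|V| 0 m_pos i (leq0n _) ltac:(by rewrite subn0).
rewrite subn0 in Gi.
pose S := [set u | tle par u (v i.+1) && (u \notin Cs)].
have GS : G i.+1 = #|S| by [].
have SV : #|S| <= #|V| - m.
  have : S \subset ~: Cs by apply/subsetP => u; rewrite !inE => /andP[].
  move/subset_leq_card; have := cardsC Cs; lia.
have aV : a < #|V| by lia.
have va_notC : v a \notin Cs.
  apply/negP => H; have [p pm vp] := Cs_img _ H.
  have := Hinj p a ltac:(lia) aV vp; lia.
apply/andP; split; last first.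
  by apply/eqP => E; rewrite E HvC in va_notC.
have [//|ntle] := boolP (tle par (v a) (v i.+1)).
exfalso.
have Bindex : forall u, u \notin Cs -> exists j, [/\ j.+2 <= m, u \in Bset par Cs v j &
    forall p, p < m -> tle par u (v p) -> p <= j].
  move=> u uC.
  pose P := fun p => (p < m) && tle par u (v p).
  have exP : exists p, P p by exists 0; rewrite /P m_pos Hv0 tle_r.
  have ubP : forall p, P p -> p <= m by move=> p /andP[h _]; lia.
  case: (ex_maxnP exP ubP) => j /andP[jm tj] jmax.
  have jne : j != m.-1 by apply/eqP => E; have := notC_low u uC; rewrite -E tj.
  exists j; split.
  - lia.
  - rewrite inE uC tj /=; apply/negP => h.
    have : P j.+1 by rewrite /P h andbT; lia.
    by move/jmax; lia.
  - by move=> p pm tp; apply: jmax; rewrite /P pm tp.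
have [ja [ja2 jaB jamax]] := Bindex (v a) va_notC.
have jai : ja <= i.
  rewrite leqNgt; apply/negP => h.
  move: jaB; rewrite inE => /andP[/andP[_ t] _].
  by move: ntle; rewrite (tle_trans _ _ _ t (vchain (i.+1) ja ltac:(lia))).
have Ssub : S \subset [seq v b | b <- iota m (a - m)].
  apply/subsetP => y; rewrite inE => /andP[ty yC].
  have [b bV vb] := Hsurj y.
  have bm : m <= b.
    rewrite leqNgt; apply/negP => h; by rewrite -vb HvC in yC.
  have [jy [jy2 jyB jymax]] := Bindex y yC.
  have ijy := jymax i.+1 im ty.
  have sq : sqle par Cs v (v b) (v a).
    exists jy, ja; split => //; first by rewrite vb.
    by left; lia.
  have ba := Hord b a ltac:(lia) ltac:(lia) sq.
  have bna : b != a by apply/eqP => E; move: ty ntle; rewrite -vb E => ->.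
  apply/mapP; exists b => //; rewrite mem_iota; lia.
have h : #|S| <= a - m.
  apply: (leq_trans (subset_leq_card Ssub)).
  by apply: leq_trans (card_size _) _; rewrite size_map size_iota.
rewrite GS in Gi; lia.
Qed.
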